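(* Let $u$ be a 5-complex number with $\rho_1>0$ (so $\theta_+\in(0,\pi)$ and $\psi_1\in(0,\pi/2]$). Then $$u=d\left(\frac52\right)^{1/2}\left(\cot^2\theta_++1+\cot^2\psi_1\right)^{-1/2}\left(\sqrt2\,e_+\cot\theta_++e_1+e_2\cot\psi_1\right)\exp\left(\tilde e_1\phi_1+\tilde e_2\phi_2\right),$$ where $\exp w=\sum_{n\ge0}w^n/n!$.
   Context: A 5-complex number is $u=x_0+h_1x_1+h_2x_2+h_3x_3+h_4x_4$ with real $x_j$, with componentwise addition and the commutative associative bilinear multiplication determined by $h_jh_k=h_{(j+k)\bmod 5}$, $h_0=1$. Modulus $d=(\sum_jx_j^2)^{1/2}$. Canonical variables: $v_+=\sum_jx_j$ and, for $k=1,2$, $v_k=\sum_jx_j\cos(2\pi kj/5)$, $\tilde v_k=\sum_jx_j\sin(2\pi kj/5)$. For $k=1,2$: $\rho_k=(v_k^2+\tilde v_k^2)^{1/2}$, $\phi_k\in[0,2\pi)$ with $\cos\phi_k=v_k/\rho_k$, $\sin\phi_k=\tilde v_k/\rho_k$. Planar angle $\psi_1\in[0,\pi/2]$: $\tan\psi_1=\rho_1/\rho_2$. Polar angle $\theta_+\in[0,\pi]$: $\tan\theta_+=\sqrt2\rho_1/v_+$. Canonical basis (with $h_0=1$): $e_+=\frac15\sum_{j=0}^4h_j$, and for $k=1,2$: $e_k=\frac25\sum_{j=0}^4\cos(2\pi kj/5)h_j$, $\tilde e_k=\frac25\sum_{j=0}^4\sin(2\pi kj/5)h_j$. Here $\cot$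 denotes $1/\tan$, with $\cot(\pi/2)=0$. *)

(* Defs.v *)
From Stdlib Require Import Reals Lra.
From Coquelicot Require Import Coquelicot.
Open Scope R_scope.

(* A 5-complex number u = x0 + h1 x1 + h2 x2 + h3 x3 + h4 x4. *)
Record C5 := mkC5 { c0 : R; c1 : R; c2 : R; c3 : R; c4 : R }.

(* j-th real component (j in 0..4; indices >= 4 default to x4, only j < 5 used). *)
Definition coef (u : C5) (j : nat) : R :=
  match j with 0 => c0 u | 1 => c1 u | 2 => c2 u | 3 => c3 u | _ => c4 u end.

Definition of_fun (f : nat -> R) : C5 := mkC5 (f 0%nat) (f 1%nat) (f 2%nat) (f 3%nat) (f 4%nat).

Definition c5add (u v : C5) : C5 := of_fun (fun j => coef u j + coef v j).
Definition c5scal (a : R) (u : C5) : C5 := of_fun (fun j => a * coef u j).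

(* Multiplication from h_j h_k = h_{(j+k) mod 5}: cyclic convolution. *)
Definition c5mul (u v : C5) : C5 :=
  of_fun (fun k => sum_f_R0 (fun j => coef u j * coef v ((k + 5 - j) mod 5)) 4).

Definition c5one : C5 := mkC5 1 0 0 0 0.

Fixpoint c5pow (w : C5) (n : nat) : C5 :=
  match n with O => c5one | S m => c5mul w (c5pow w m) end.

Definition c5exp (w : C5) : C5 :=
  of_fun (fun j => Series (fun n => coef (c5pow w n) j / INR (Factorial.fact n))).

Definition modulus (u : C5) : R := sqrt (sum_f_R0 (fun j => coef u j ^ 2) 4).
Definition vplus (u : C5) : R := sum_f_R0 (fun j => coef u j) 4.
Definition vk (k : nat) (u : C5) : R :=
  sum_f_R0 (fun j => coef u j * cos (2 * PI * INR k * INR j / 5)) 4.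
Definition vtk (k : nat) (u : C5) : R :=
  sum_f_R0 (fun j => coef u j * sin (2 * PI * INR k * INR j / 5)) 4.
Definition rhok (k : nat) (u : C5) : R := sqrt (vk k u ^ 2 + vtk k u ^ 2).

Definition eplus : C5 := of_fun (fun _ => 1 / 5).
Definition ek (k : nat) : C5 := of_fun (fun j => 2 / 5 * cos (2 * PI * INR k * INR j / 5)).
Definition etk (k : nat) : C5 := of_fun (fun j => 2 / 5 * sin (2 * PI * INR k * INR j / 5)).

Definition cot (x : R) : R := cos x / sin x.

(* Main.v *)
From Stdlib Require Import Reals Lra Lia Nsatz.
From Coquelicot Require Import Coquelicot.
Require Import Defs.
Open Scope R_scope.

Fixpoint rc (n:nat) : R*R := match n with 0%nat => (1,0) | S m => (- snd (rc m), fst (rc m)) end.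

Lemma rc_S m : rc (S m) = (- snd (rc m), fst (rc m)).
Proof. reflexivity. Qed.

Lemma rc_even_odd n : rc (2*n) = ((-1)^n, 0) /\ rc (2*n+1) = (0, (-1)^n).
Proof.
  induction n as [|n [IH1 IH2]].
  - simpl. split; f_equal; ring.
  - replace (2 * S n + 1)%nat with (S (S (2*n+1))) by lia.
    replace (2 * S n)%nat with (S (2*n+1)) by lia.
    split; [rewrite rc_S, IH2 | rewrite rc_S, rc_S, IH2]; simpl; f_equal; ring.
Qed.

Lemma is_series_0 : is_series (fun _ : nat => 0) 0.
Proof.
  eapply is_series_ext; [|apply (is_pseries_0 (K:=R_AbsRing) (fun _ : nat => 0))].
  intro n; unfold scal; simpl; unfold mult; simpl; ring.
Qed.

Lemma pow_sqr x k : (x^2)^k = (Rsqr x)^k.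
Proof. unfold Rsqr. f_equal. ring. Qed.

Lemma ser_cos x : is_series (fun n => x^n * fst (rc n) / INR (Factorial.fact n)) (cos x).
Proof.
  assert (H: is_pseries (fun n => fst (rc n) / INR (Factorial.fact n)) x (cos x)).
  { replace (cos x) with (cos x + x * 0) by ring.
    apply is_pseries_odd_even.
    - unfold is_pseries. unfold cos. destruct (exist_cos (Rsqr x)) as [l Hl].
      unfold cos_in in Hl.
      eapply is_series_ext; [|apply is_series_Reals; exact Hl].
      intro k. rewrite pow_n_pow. destruct (rc_even_odd k) as [E _]. rewrite E.
      unfold cos_n, scal; simpl. unfold mult; simpl. replace (x*(x*1)) with (Rsqr x) by (unfold Rsqr; ring). ring.
    - unfold is_pseries. eapply is_series_ext; [|apply is_series_0].
      intro k. rewrite pow_n_pow. destruct (rc_even_odd k) as [_ E]. rewrite E.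
      unfold scal; simpl. unfold mult; simpl. field.
      apply not_0_INR, Factorial.fact_neq_0. }
  eapply is_series_ext; [|exact H]. intro k. unfold scal; simpl.
  unfold mult; simpl. rewrite pow_n_pow. unfold Rdiv; ring.
Qed.

Lemma ser_sin x : is_series (fun n => x^n * snd (rc n) / INR (Factorial.fact n)) (sin x).
Proof.
  assert (H: is_pseries (fun n => snd (rc n) / INR (Factorial.fact n)) x (sin x)).
  { unfold sin. destruct (exist_sin (Rsqr x)) as [l Hl].
    replace (x * l) with (0 + x * l) by ring.
    apply is_pseries_odd_even.
    - unfold is_pseries. eapply is_series_ext; [|apply is_series_0].
      intro k. rewrite pow_n_pow. destruct (rc_even_odd k) as [E _]. rewrite E.
      unfold scal; simpl. unfold mult; simpl. field.
      apply not_0_INR, Factorial.fact_neq_0.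
    - unfold is_pseries. unfold sin_in in Hl.
      eapply is_series_ext; [|apply is_series_Reals; exact Hl].
      intro k. rewrite pow_n_pow. destruct (rc_even_odd k) as [_ E]. rewrite E.
      unfold sin_n, scal; simpl. unfold mult; simpl. replace (x*(x*1)) with (Rsqr x) by (unfold Rsqr; ring). ring. }
  eapply is_series_ext; [|exact H]. intro k. unfold scal; simpl.
  unfold mult; simpl. rewrite pow_n_pow. unfold Rdiv; ring.
Qed.

Lemma ser_one : is_series (fun n => match n with 0%nat => 1 | _ => 0 end / INR (Factorial.fact n)) 1.
Proof.
  eapply is_series_ext; [|apply (is_pseries_0 (fun n => match n with 0%nat => 1 | _ => 0 end))].
  intro n; destruct n; unfold scal; simpl; unfold mult; simpl; unfold one, zero; simpl; [field | unfold Rdiv; ring].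
Qed.

Definition C1 := cos (2*PI/5).
Definition S1 := sin (2*PI/5).
Definition S2 := sin (4*PI/5).

Lemma cm x : cos (2*PI - x) = cos x.
Proof. rewrite cos_minus, cos_2PI, sin_2PI. ring. Qed.
Lemma sm x : sin (2*PI - x) = - sin x.
Proof. rewrite sin_minus, cos_2PI, sin_2PI. ring. Qed.
Lemma cp x : cos (2*PI + x) = cos x.
Proof. rewrite cos_plus, cos_2PI, sin_2PI. ring. Qed.
Lemma sp x : sin (2*PI + x) = sin x.
Proof. rewrite sin_plus, cos_2PI, sin_2PI. ring. Qed.

Definition ca := cos (PI/5).
Definition sb := sin (PI/5).

Lemma C1_ab : C1 = 2*ca*ca - 1.
Proof. unfold C1, ca. rewrite <- cos_2a_cos. f_equal. field. Qed.
Lemma S1_ab : S1 = 2*sb*ca.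
Proof. unfold S1, ca, sb. rewrite <- sin_2a. f_equal. field. Qed.
Lemma S2_ab : S2 = sb.
Proof. unfold S2, sb. rewrite <- sin_PI_x. f_equal. field. Qed.
Lemma C45_ab : cos (4*PI/5) = - ca.
Proof. unfold ca. rewrite <- Rtrigo_facts.cos_pi_minus. f_equal. field. Qed.
Lemma ab1 : ca*ca + sb*sb = 1.
Proof. unfold ca, sb. pose proof (sin2_cos2 (PI/5)). unfold Rsqr in H. lra. Qed.
Lemma ab2 : 4*ca*ca = 2*ca+1.
Proof.
  assert (E: cos (4*PI/5) = 2 * C1 * C1 - 1).
  { unfold C1. rewrite <- cos_2a_cos. f_equal. field. }
  rewrite C45_ab, C1_ab in E.
  assert (Ha : 1/2 < ca).
  { rewrite <- cos_PI3. unfold ca. pose proof PI_RGT_0.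
    apply cos_decreasing_1; lra. }
  assert (F: (ca+1)*(2*ca-1)*(4*ca*ca-2*ca-1) = 0) by nra.
  apply Rmult_integral in F. destruct F as [F|F]; [|lra].
  apply Rmult_integral in F. destruct F; nra.
Qed.

Lemma Rm_C1C1 : C1 * C1 - (1/4 - C1/2) = 0.
Proof. rewrite C1_ab. pose proof ab1; pose proof ab2. unfold Rdiv. assert (h2: 2 * /2 = 1) by field. assert (h4 : 4 * /4 = 1) by field. generalize dependent (/2). generalize dependent (/4). intros. nsatz. Qed.
Lemma Rm_S1S1 : S1 * S1 - (3/4 + C1/2) = 0.
Proof. rewrite C1_ab, S1_ab. pose proof ab1; pose proof ab2. unfold Rdiv. assert (h2: 2 * /2 = 1) by field. assert (h4 : 4 * /4 = 1) by field. generalize dependent (/2). generalize dependent (/4). intros. nsatz. Qed.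
Lemma Rm_S2S2 : S2 * S2 - (1/2 - C1/2) = 0.
Proof. rewrite C1_ab, S2_ab. pose proof ab1; pose proof ab2. unfold Rdiv. assert (h2: 2 * /2 = 1) by field. assert (h4 : 4 * /4 = 1) by field. generalize dependent (/2). generalize dependent (/4). intros. nsatz. Qed.
Lemma Rm_S1S2 : S1 * S2 - (C1 + 1/4) = 0.
Proof. rewrite C1_ab, S1_ab, S2_ab. pose proof ab1; pose proof ab2. unfold Rdiv. assert (h2: 2 * /2 = 1) by field. assert (h4 : 4 * /4 = 1) by field. generalize dependent (/2). generalize dependent (/4). intros. nsatz. Qed.
Lemma Rm_C1S1 : C1 * S1 - (S2/2) = 0.
Proof. rewrite C1_ab, S1_ab, S2_ab. pose proof ab1; pose proof ab2. unfold Rdiv. assert (h2: 2 * /2 = 1) by field. assert (h4 : 4 * /4 = 1) by field. generalize dependent (/2). generalize dependent (/4). intros. nsatz. Qed.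
Lemma Rm_C1S2 : C1 * S2 - (S1/2 - S2/2) = 0.
Proof. rewrite C1_ab, S1_ab, S2_ab. pose proof ab1; pose proof ab2. unfold Rdiv. assert (h2: 2 * /2 = 1) by field. assert (h4 : 4 * /4 = 1) by field. generalize dependent (/2). generalize dependent (/4). intros. nsatz. Qed.

Lemma C45 : cos (4*PI/5) = -(1/2) - C1.
Proof. rewrite C45_ab, C1_ab. pose proof ab2. lra. Qed.

Definition Ev (p q r s t : R) : C5 :=
  mkC5 (p/5 + 2/5*(q + s))
       (p/5 + 2/5*(q*C1 + r*S1 + s*(-(1/2) - C1) + t*S2))
       (p/5 + 2/5*(q*(-(1/2) - C1) + r*S2 + s*C1 - t*S1))
       (p/5 + 2/5*(q*(-(1/2) - C1) - r*S2 + s*C1 + t*S1))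
       (p/5 + 2/5*(q*C1 - r*S1 + s*(-(1/2) - C1) - t*S2)).

Definition VK1 (x0 x1 x2 x3 x4 : R) := x0 + x1*C1 + x2*(-(1/2) - C1) + x3*(-(1/2) - C1) + x4*C1.
Definition VT1 (x0 x1 x2 x3 x4 : R) := x1*S1 + x2*S2 - x3*S2 - x4*S1.
Definition VK2 (x0 x1 x2 x3 x4 : R) := x0 + x1*(-(1/2) - C1) + x2*C1 + x3*C1 + x4*(-(1/2) - C1).
Definition VT2 (x0 x1 x2 x3 x4 : R) := x1*S2 - x2*S1 + x3*S1 - x4*S2.

Lemma mulE a1 a2 a3 a4 a5 b1 b2 b3 b4 b5 : c5mul (Ev a1 a2 a3 a4 a5) (Ev b1 b2 b3 b4 b5) = Ev (a1*b1) (a2*b2-a3*b3) (a2*b3+a3*b2) (a4*b4-a5*b5) (a4*b5+a5*b4).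
Proof. unfold c5mul, Ev, of_fun; simpl; f_equal.
  - (apply Rminus_diag_uniq; transitivity (((16/25)*a2*b2 + (-16/25)*a2*b4 + (-16/25)*a4*b2 + (16/25)*a4*b4) * (C1 * C1 - (1/4 - C1/2)) + ((-8/25)*a3*b3 + (-8/25)*a5*b5) * (S1 * S1 - (3/4 + C1/2)) + ((-8/25)*a3*b3 + (-8/25)*a5*b5) * (S2 * S2 - (1/2 - C1/2))); [field | rewrite !Rm_C1C1, !Rm_S1S1, !Rm_S2S2; field]).
  - (apply Rminus_diag_uniq; transitivity (((4/25)*a2*b3 + (-8/25)*a2*b5 + (4/25)*a3*b2 + (-4/25)*a3*b4 + (-4/25)*a4*b3 + (8/25)*a4*b5 + (-8/25)*a5*b2 + (8/25)*a5*b4) * (C1 * S1 - (S2/2)) + ((8/25)*a2*b3 + (4/25)*a2*b5 + (8/25)*a3*b2 + (-8/25)*a3*b4 + (-8/25)*a4*b3 + (-4/25)*a4*b5 + (4/25)*a5*b2 + (-4/25)*a5*b4) * (C1 * S2 - (S1/2 - S2/2)) + ((-8/25)*a3*b3 + (-4/25)*a3*b5 + (-4/25)*a5*b3 + (8/25)*a5*b5) * (S1 * S2 - (C1 + 1/4)) + ((4/25)*a3*b3 + (-4/25)*a3*b5 + (-4/25)*a5*b3) * (S2 * S2 - (1/2 - C1/2)) + ((4/25)*a3*b5 + (4/25)*a5*b3 + (4/25)*a5*b5) * (S1 * S1 - (3/4 + C1/2)) + ((-4/25)*a2*b2 + (4/25)*a2*b4 + (4/25)*a4*b2 + (-4/25)*a4*b4)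 * (C1 * C1 - (1/4 - C1/2))); [field | rewrite !Rm_C1S1, !Rm_C1S2, !Rm_S1S2, !Rm_S2S2, !Rm_S1S1, !Rm_C1C1; field]).
  - (apply Rminus_diag_uniq; transitivity (((8/25)*a2*b3 + (4/25)*a2*b5 + (8/25)*a3*b2 + (-8/25)*a3*b4 + (-8/25)*a4*b3 + (-4/25)*a4*b5 + (4/25)*a5*b2 + (-4/25)*a5*b4) * (C1 * S1 - (S2/2)) + ((-4/25)*a2*b3 + (8/25)*a2*b5 + (-4/25)*a3*b2 + (4/25)*a3*b4 + (4/25)*a4*b3 + (-8/25)*a4*b5 + (8/25)*a5*b2 + (-8/25)*a5*b4) * (C1 * S2 - (S1/2 - S2/2)) + ((4/25)*a3*b3 + (-4/25)*a3*b5 + (-4/25)*a5*b3) * (S1 * S1 - (3/4 + C1/2)) + ((8/25)*a3*b3 + (4/25)*a3*b5 + (4/25)*a5*b3 + (-8/25)*a5*b5) * (S1 * S2 - (C1 + 1/4)) + ((4/25)*a3*b5 + (4/25)*a5*b3 + (4/25)*a5*b5) * (S2 * S2 - (1/2 - C1/2)) + ((-4/25)*a2*b2 + (4/25)*a2*b4 + (4/25)*a4*b2 + (-4/25)*a4*b4) * (C1 * C1 - (1/4 - C1/2))); [field | rewrite !Rm_C1S1, !Rm_C1S2, !Rm_S1S1, !Rm_S1S2, !Rm_S2S2, !Rm_C1C1; field]).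
  - (apply Rminus_diag_uniq; transitivity (((-4/25)*a2*b2 + (4/25)*a2*b4 + (4/25)*a4*b2 + (-4/25)*a4*b4) * (C1 * C1 - (1/4 - C1/2)) + ((4/25)*a2*b3 + (-8/25)*a2*b5 + (4/25)*a3*b2 + (-4/25)*a3*b4 + (-4/25)*a4*b3 + (8/25)*a4*b5 + (-8/25)*a5*b2 + (8/25)*a5*b4) * (C1 * S2 - (S1/2 - S2/2)) + ((-8/25)*a2*b3 + (-4/25)*a2*b5 + (-8/25)*a3*b2 + (8/25)*a3*b4 + (8/25)*a4*b3 + (4/25)*a4*b5 + (-4/25)*a5*b2 + (4/25)*a5*b4) * (C1 * S1 - (S2/2)) + ((8/25)*a3*b3 + (4/25)*a3*b5 + (4/25)*a5*b3 + (-8/25)*a5*b5) * (S1 * S2 - (C1 + 1/4)) + ((4/25)*a3*b3 + (-4/25)*a3*b5 + (-4/25)*a5*b3) * (S1 * S1 - (3/4 + C1/2)) + ((4/25)*a3*b5 + (4/25)*a5*b3 + (4/25)*a5*b5) * (S2 * S2 - (1/2 - C1/2))); [field | rewrite !Rm_C1C1, !Rm_C1S2, !Rm_C1S1, !Rm_S1S2, !Rm_S1S1, !Rm_S2S2; field]).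
  - (apply Rminus_diag_uniq; transitivity (((-8/25)*a2*b3 + (-4/25)*a2*b5 + (-8/25)*a3*b2 + (8/25)*a3*b4 + (8/25)*a4*b3 + (4/25)*a4*b5 + (-4/25)*a5*b2 + (4/25)*a5*b4) * (C1 * S2 - (S1/2 - S2/2)) + ((-4/25)*a2*b3 + (8/25)*a2*b5 + (-4/25)*a3*b2 + (4/25)*a3*b4 + (4/25)*a4*b3 + (-8/25)*a4*b5 + (8/25)*a5*b2 + (-8/25)*a5*b4) * (C1 * S1 - (S2/2)) + ((-8/25)*a3*b3 + (-4/25)*a3*b5 + (-4/25)*a5*b3 + (8/25)*a5*b5) * (S1 * S2 - (C1 + 1/4)) + ((4/25)*a3*b5 + (4/25)*a5*b3 + (4/25)*a5*b5) * (S1 * S1 - (3/4 + C1/2)) + ((4/25)*a3*b3 + (-4/25)*a3*b5 + (-4/25)*a5*b3) * (S2 * S2 - (1/2 - C1/2)) + ((-4/25)*a2*b2 + (4/25)*a2*b4 + (4/25)*a4*b2 + (-4/25)*a4*b4) * (C1 * C1 - (1/4 - C1/2))); [field | rewrite !Rm_C1S2, !Rm_C1S1, !Rm_S1S2, !Rm_S1S1, !Rm_S2S2, !Rm_C1C1; field]).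
Qed.

Lemma dft_aux x0 x1 x2 x3 x4 : mkC5 x0 x1 x2 x3 x4 = Ev (x0+x1+x2+x3+x4) (VK1 x0 x1 x2 x3 x4) (VT1 x0 x1 x2 x3 x4) (VK2 x0 x1 x2 x3 x4) (VT2 x0 x1 x2 x3 x4).
Proof. unfold Ev, VK1, VT1, VK2, VT2; f_equal.
  - field.
  - (apply Rminus_diag_uniq; transitivity (((-4/5)*x1 + (4/5)*x2 + (4/5)*x3 + (-4/5)*x4) * (C1 * C1 - (1/4 - C1/2)) + ((-2/5)*x1 + (2/5)*x4) * (S1 * S1 - (3/4 + C1/2)) + ((-2/5)*x1 + (2/5)*x4) * (S2 * S2 - (1/2 - C1/2))); [field | rewrite !Rm_C1C1, !Rm_S1S1, !Rm_S2S2; field]).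
  - (apply Rminus_diag_uniq; transitivity (((4/5)*x1 + (-4/5)*x2 + (-4/5)*x3 + (4/5)*x4) * (C1 * C1 - (1/4 - C1/2)) + ((-2/5)*x2 + (2/5)*x3) * (S2 * S2 - (1/2 - C1/2)) + ((-2/5)*x2 + (2/5)*x3) * (S1 * S1 - (3/4 + C1/2))); [field | rewrite !Rm_C1C1, !Rm_S2S2, !Rm_S1S1; field]).
  - (apply Rminus_diag_uniq; transitivity (((4/5)*x1 + (-4/5)*x2 + (-4/5)*x3 + (4/5)*x4) * (C1 * C1 - (1/4 - C1/2)) + ((2/5)*x2 + (-2/5)*x3) * (S2 * S2 - (1/2 - C1/2)) + ((2/5)*x2 + (-2/5)*x3) * (S1 * S1 - (3/4 + C1/2))); [field | rewrite !Rm_C1C1, !Rm_S2S2, !Rm_S1S1; field]).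
  - (apply Rminus_diag_uniq; transitivity (((-4/5)*x1 + (4/5)*x2 + (4/5)*x3 + (-4/5)*x4) * (C1 * C1 - (1/4 - C1/2)) + ((2/5)*x1 + (-2/5)*x4) * (S1 * S1 - (3/4 + C1/2)) + ((2/5)*x1 + (-2/5)*x4) * (S2 * S2 - (1/2 - C1/2))); [field | rewrite !Rm_C1C1, !Rm_S1S1, !Rm_S2S2; field]).
Qed.

Lemma parseval_aux x0 x1 x2 x3 x4 : 5*(x0*x0+x1*x1+x2*x2+x3*x3+x4*x4) = (x0+x1+x2+x3+x4)*(x0+x1+x2+x3+x4) + 2*(VK1 x0 x1 x2 x3 x4 * VK1 x0 x1 x2 x3 x4 + VT1 x0 x1 x2 x3 x4 * VT1 x0 x1 x2 x3 x4 + VK2 x0 x1 x2 x3 x4 * VK2 x0 x1 x2 x3 x4 + VT2 x0 x1 x2 x3 x4 * VT2 x0 x1 x2 x3 x4).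
Proof. unfold VK1, VT1, VK2, VT2. (apply Rminus_diag_uniq; transitivity (((-4)*x1*x1 + (8)*x1*x2 + (8)*x1*x3 + (-8)*x1*x4 + (-4)*x2*x2 + (-8)*x2*x3 + (8)*x2*x4 + (-4)*x3*x3 + (8)*x3*x4 + (-4)*x4*x4) * (C1 * C1 - (1/4 - C1/2)) + ((-2)*x1*x1 + (4)*x1*x4 + (-2)*x2*x2 + (4)*x2*x3 + (-2)*x3*x3 + (-2)*x4*x4) * (S1 * S1 - (3/4 + C1/2)) + ((-2)*x1*x1 + (4)*x1*x4 + (-2)*x2*x2 + (4)*x2*x3 + (-2)*x3*x3 + (-2)*x4*x4) * (S2 * S2 - (1/2 - C1/2))); [field | rewrite !Rm_C1C1, !Rm_S1S1, !Rm_S2S2; field]). Qed.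


Ltac angle e := match goal with |- context [?f (2 * PI * INR ?k * INR ?j / 5)] =>
  replace (2 * PI * INR k * INR j / 5) with e by (simpl; lra) end.

Lemma T1c0 : cos (2 * PI * INR 1 * INR 0 / 5) = 1.
Proof. angle 0. apply cos_0. Qed.
Lemma T1s0 : sin (2 * PI * INR 1 * INR 0 / 5) = 0.
Proof. angle 0. apply sin_0. Qed.
Lemma T2c0 : cos (2 * PI * INR 2 * INR 0 / 5) = 1.
Proof. angle 0. apply cos_0. Qed.
Lemma T2s0 : sin (2 * PI * INR 2 * INR 0 / 5) = 0.
Proof. angle 0. apply sin_0. Qed.
Lemma T1c1 : cos (2 * PI * INR 1 * INR 1 / 5) = C1.
Proof. angle (2*PI/5). reflexivity. Qed.
Lemma T1s1 : sin (2 * PI * INR 1 * INR 1 / 5) = S1.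
Proof. angle (2*PI/5). reflexivity. Qed.
Lemma T1c2 : cos (2 * PI * INR 1 * INR 2 / 5) = -(1/2) - C1.
Proof. angle (4*PI/5). apply C45. Qed.
Lemma T1s2 : sin (2 * PI * INR 1 * INR 2 / 5) = S2.
Proof. angle (4*PI/5). reflexivity. Qed.
Lemma T1c3 : cos (2 * PI * INR 1 * INR 3 / 5) = -(1/2) - C1.
Proof. angle (2*PI - 4*PI/5). rewrite cm. apply C45. Qed.
Lemma T1s3 : sin (2 * PI * INR 1 * INR 3 / 5) = - S2.
Proof. angle (2*PI - 4*PI/5). rewrite sm. reflexivity. Qed.
Lemma T1c4 : cos (2 * PI * INR 1 * INR 4 / 5) = C1.
Proof. angle (2*PI - 2*PI/5). rewrite cm. reflexivity. Qed.
Lemma T1s4 : sin (2 * PI * INR 1 * INR 4 / 5) = - S1.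
Proof. angle (2*PI - 2*PI/5). rewrite sm. reflexivity. Qed.
Lemma T2c1 : cos (2 * PI * INR 2 * INR 1 / 5) = -(1/2) - C1.
Proof. angle (4*PI/5). apply C45. Qed.
Lemma T2s1 : sin (2 * PI * INR 2 * INR 1 / 5) = S2.
Proof. angle (4*PI/5). reflexivity. Qed.
Lemma T2c2 : cos (2 * PI * INR 2 * INR 2 / 5) = C1.
Proof. angle (2*PI - 2*PI/5). rewrite cm. reflexivity. Qed.
Lemma T2s2 : sin (2 * PI * INR 2 * INR 2 / 5) = - S1.
Proof. angle (2*PI - 2*PI/5). rewrite sm. reflexivity. Qed.
Lemma T2c3 : cos (2 * PI * INR 2 * INR 3 / 5) = C1.
Proof. angle (2*PI + 2*PI/5). rewrite cp. reflexivity. Qed.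
Lemma T2s3 : sin (2 * PI * INR 2 * INR 3 / 5) = S1.
Proof. angle (2*PI + 2*PI/5). rewrite sp. reflexivity. Qed.
Lemma T2c4 : cos (2 * PI * INR 2 * INR 4 / 5) = -(1/2) - C1.
Proof. angle (2*PI + (2*PI - 4*PI/5)). rewrite cp, cm. apply C45. Qed.
Lemma T2s4 : sin (2 * PI * INR 2 * INR 4 / 5) = - S2.
Proof. angle (2*PI + (2*PI - 4*PI/5)). rewrite sp, sm. reflexivity. Qed.

Ltac trigrw := rewrite ?T1c0, ?T1s0, ?T2c0, ?T2s0, ?T1c1, ?T1s1, ?T1c2, ?T1s2, ?T1c3, ?T1s3,
  ?T1c4, ?T1s4, ?T2c1, ?T2s1, ?T2c2, ?T2s2, ?T2c3, ?T2s3, ?T2c4, ?T2s4.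

Lemma ek1E : ek 1 = Ev 0 1 0 0 0.
Proof. unfold ek, of_fun. cbv beta. trigrw. unfold Ev. f_equal; field. Qed.
Lemma ek2E : ek 2 = Ev 0 0 0 1 0.
Proof. unfold ek, of_fun. cbv beta. trigrw. unfold Ev. f_equal; field. Qed.
Lemma etk1E : etk 1 = Ev 0 0 1 0 0.
Proof. unfold etk, of_fun. cbv beta. trigrw. unfold Ev. f_equal; field. Qed.
Lemma etk2E : etk 2 = Ev 0 0 0 0 1.
Proof. unfold etk, of_fun. cbv beta. trigrw. unfold Ev. f_equal; field. Qed.
Lemma eplusE : eplus = Ev 1 0 0 0 0.
Proof. unfold eplus, of_fun. unfold Ev. f_equal; field. Qed.
Lemma oneE : c5one = Ev 1 1 0 1 0.
Proof. unfold c5one, Ev. f_equal; field. Qed.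

Lemma scalE k p q r s t : c5scal k (Ev p q r s t) = Ev (k*p) (k*q) (k*r) (k*s) (k*t).
Proof. unfold c5scal, of_fun, Ev. simpl. f_equal; field. Qed.
Lemma addE p q r s t p' q' r' s' t' :
  c5add (Ev p q r s t) (Ev p' q' r' s' t') = Ev (p+p') (q+q') (r+r') (s+s') (t+t').
Proof. unfold c5add, of_fun, Ev. simpl. f_equal; field. Qed.

Lemma dft u : u = Ev (vplus u) (vk 1 u) (vtk 1 u) (vk 2 u) (vtk 2 u).
Proof.
  destruct u as [x0 x1 x2 x3 x4]. unfold vplus, vk, vtk. cbn [sum_f_R0]. trigrw. cbn [coef].
  rewrite (dft_aux x0 x1 x2 x3 x4) at 1. unfold VK1, VT1, VK2, VT2. f_equal; simpl; field.
Qed.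

Lemma parseval u : 5 * sum_f_R0 (fun j => coef u j ^ 2) 4 =
  vplus u ^ 2 + 2 * (vk 1 u ^ 2 + vtk 1 u ^ 2 + vk 2 u ^ 2 + vtk 2 u ^ 2).
Proof.
  destruct u as [x0 x1 x2 x3 x4]. unfold vplus, vk, vtk. cbn [sum_f_R0]. trigrw. cbn [coef].
  pose proof (parseval_aux x0 x1 x2 x3 x4) as P. unfold VK1, VT1, VK2, VT2 in P.
  simpl. rewrite !Rmult_1_r. rewrite P. ring.
Qed.

Lemma c5pow_S w n : c5pow w (S n) = c5mul w (c5pow w n).
Proof. reflexivity. Qed.

Lemma powE f1 f2 n : c5pow (Ev 0 0 f1 0 f2) n =
  Ev (match n with 0%nat => 1 | _ => 0 end) (f1^n * fst (rc n)) (f1^n * snd (rc n))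
     (f2^n * fst (rc n)) (f2^n * snd (rc n)).
Proof.
  induction n.
  - simpl c5pow. rewrite oneE. simpl. f_equal; ring.
  - rewrite c5pow_S, IHn, mulE, rc_S. simpl. f_equal; ring.
Qed.

Lemma coefEv p q r s t j : coef (Ev p q r s t) j =
  p * coef (Ev 1 0 0 0 0) j + q * coef (Ev 0 1 0 0 0) j + r * coef (Ev 0 0 1 0 0) j
  + s * coef (Ev 0 0 0 1 0) j + t * coef (Ev 0 0 0 0 1) j.
Proof. destruct j as [|[|[|[|j]]]]; unfold Ev; simpl; field. Qed.

Lemma ser_plus (a b : nat -> R) la lb : is_series a la -> is_series b lb ->
  is_series (fun n => a n + b n) (la + lb).
Proof. intros Ha Hb. exact (is_series_plus a b la lb Ha Hb). Qed.

Lemma expE f1 f2 : c5exp (Ev 0 0 f1 0 f2) = Ev 1 (cos f1) (sin f1) (cos f2) (sin f2).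
Proof.
  assert (H: forall j, Series (fun n => coef (c5pow (Ev 0 0 f1 0 f2) n) j / INR (Factorial.fact n))
     = coef (Ev 1 (cos f1) (sin f1) (cos f2) (sin f2)) j).
  { intro j. apply is_series_unique. rewrite coefEv.
    eapply is_series_ext; [|
      apply ser_plus; [apply ser_plus; [apply ser_plus; [apply ser_plus|]|]|];
      apply is_series_scal_r; [apply ser_one | apply ser_cos | apply ser_sin | apply ser_cos | apply ser_sin]].
    intro n. simpl. rewrite powE, (coefEv _ (f1^n * _)). set (d := match n with 0%nat => 1 | _ => 0 end). unfold Rdiv. ring. }
  unfold c5exp, of_fun. rewrite !H. unfold Ev. simpl. reflexivity.
Qed.

Theorem mainTheorem7 (u : C5) (phi1 phi2 thetap psi1 : R)
  (hrho1 : 0 < rhok 1 u)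
  (hphi1 : 0 <= phi1 < 2 * PI)
  (hphi1c : rhok 1 u * cos phi1 = vk 1 u) (hphi1s : rhok 1 u * sin phi1 = vtk 1 u)
  (hphi2 : 0 <= phi2 < 2 * PI)
  (hphi2c : rhok 2 u * cos phi2 = vk 2 u) (hphi2s : rhok 2 u * sin phi2 = vtk 2 u)
  (htheta : 0 <= thetap <= PI)
  (hthetat : sin thetap * vplus u = sqrt 2 * rhok 1 u * cos thetap)
  (hpsi : 0 <= psi1 <= PI / 2)
  (hpsit : sin psi1 * rhok 2 u = rhok 1 u * cos psi1) :
  u = c5mul
        (c5scal (modulus u * sqrt (5 / 2)
                 / sqrt (cot thetap ^ 2 + 1 + cot psi1 ^ 2))
           (c5add (c5scal (sqrt 2 * cot thetap) eplus)
                  (c5add (ek 1) (c5scal (cot psi1) (ek 2)))))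
        (c5exp (c5add (c5scal phi1 (etk 1)) (c5scal phi2 (etk 2)))).
Proof.
  set (r1 := rhok 1 u) in *. set (r2 := rhok 2 u) in *.
  assert (hs2 : 0 < sqrt 2) by (apply sqrt_lt_R0; lra).
  assert (hst : 0 < sin thetap).
  { assert (hh : 0 <= sin thetap) by (apply sin_ge_0; lra).
    destruct (Rle_lt_or_eq_dec _ _ hh) as [h|h]; [exact h|].
    exfalso. rewrite <- h in hthetat.
    assert (cos thetap = 0).
    { assert (sqrt 2 * r1 <> 0) by (apply Rmult_integral_contrapositive; split; lra).
      apply (Rmult_eq_reg_l (sqrt 2 * r1)); [lra|auto]. }
    pose proof (sin2_cos2 thetap). unfold Rsqr in *. rewrite <- h, H in H0. lra. }
  assert (hsp : 0 < sin psi1).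
  { assert (hh : 0 <= sin psi1) by (apply sin_ge_0; pose proof PI_RGT_0; lra).
    destruct (Rle_lt_or_eq_dec _ _ hh) as [h|h]; [exact h|].
    exfalso. rewrite <- h in hpsit.
    assert (cos psi1 = 0).
    { apply (Rmult_eq_reg_l r1); lra. }
    pose proof (sin2_cos2 psi1). unfold Rsqr in *. rewrite <- h, H in H0. lra. }
  assert (ct : cot thetap = vplus u / (sqrt 2 * r1)).
  { unfold cot. field_simplify_eq; [lra | repeat split; lra]. }
  assert (cps : cot psi1 = r2 / r1).
  { unfold cot. field_simplify_eq; [lra | repeat split; lra]. }
  assert (r1sq : r1 * r1 = vk 1 u ^ 2 + vtk 1 u ^ 2).
  { unfold r1, rhok. apply sqrt_sqrt. nra. }
  assert (r2sq : r2 * r2 = vk 2 u ^ 2 + vtk 2 u ^ 2).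
  { unfold r2, rhok. apply sqrt_sqrt. nra. }
  assert (r2pos : 0 <= r2) by (unfold r2, rhok; apply sqrt_pos).
  pose proof (parseval u) as Pv.
  set (S := sum_f_R0 (fun j => coef u j ^ 2) 4) in *.
  assert (Spos : 0 < S) by nra.
  assert (hsS : 0 < sqrt S) by (apply sqrt_lt_R0; lra).
  assert (hs52 : 0 < sqrt (5/2)) by (apply sqrt_lt_R0; lra).
  assert (sD : sqrt (cot thetap ^ 2 + 1 + cot psi1 ^ 2) = sqrt S * sqrt (5/2) / r1).
  { apply sqrt_lem_1.
    - nra.
    - apply Rlt_le. apply Rdiv_lt_0_compat; [nra|lra].
    - rewrite ct, cps.
      assert (E: sqrt S * sqrt (5/2) / r1 * (sqrt S * sqrt (5/2) / r1)
                 = (sqrt S * sqrt S) * (sqrt (5/2) * sqrt (5/2)) / (r1 * r1)) by (field; lra).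
      rewrite E, !sqrt_sqrt by lra.
      assert (E2 : sqrt 2 * sqrt 2 = 2) by (apply sqrt_sqrt; lra).
      field_simplify_eq; [|split; lra].
      replace (sqrt 2 ^ 2) with 2 by (simpl; lra).
      replace (r1^2) with (r1*r1) by ring. replace (r2^2) with (r2*r2) by ring.
      rewrite r1sq, r2sq. lra. }
  assert (HK : modulus u * sqrt (5 / 2) / sqrt (cot thetap ^ 2 + 1 + cot psi1 ^ 2) = r1).
  { rewrite sD. unfold modulus. fold S. field. split; lra. }
  rewrite HK, ct, cps.
  assert (W : c5add (c5scal phi1 (etk 1)) (c5scal phi2 (etk 2)) = Ev 0 0 phi1 0 phi2).
  { rewrite etk1E, etk2E, !scalE, addE. f_equal; ring. }
  rewrite W, expE, eplusE, ek1E, ek2E, !scalE, !addE, !scalE, mulE.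
  etransitivity; [apply dft|].
  f_equal.
  - field. split; lra.
  - rewrite <- hphi1c. fold r1. ring.
  - rewrite <- hphi1s. fold r1. ring.
  - rewrite <- hphi2c. fold r2. field. lra.
  - rewrite <- hphi2s. fold r2. field. lra.
Qed.
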